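(* Let $\psi$ be an injective map from the positive integers to the positive integers and let $A=\{\psi(n): n\ge 1\}$. Let $\alpha$ be a positive even integer. For every nonnegative integer $n$, \[ \bar{p}^{A}(n)=\sum_{(N_0,N_1,N_2,\dots)}\ \prod_{j\ge0}\bar{p}^{A}_{\alpha}(N_j), \] where the sum runs over all sequences $(N_0,N_1,\dots)$ of nonnegative integers with $n=\sum_{i\ge0}(\alpha+1)^{i}N_i$.
   Context: For a set $A$ of positive integers: $\bar{p}^{A}(n)=E^{A}(n)-O^{A}(n)$, where $E^{A}(n)$ (resp. $O^{A}(n)$) is the number of partitions of $n$ into parts from $A$ (no restriction on multiplicities) with an even (resp. odd) number of parts, and $\bar{p}^{A}(0)=1$. For a positive integer $\alpha$, $\bar{p}^{A}_{\alpha}(n)=E^{A}_{\alpha}(n)-O^{A}_{\alpha}(n)$, where $E^{A}_{\alpha}(n)$ (resp. $O^{A}_{\alpha}(n)$) is the number of partitions of $n$ into parts from $A$ in which each part occurs at most $\alpha$ times and having an even (resp. odd) number of parts, and $\bar{p}^{A}_{\alpha}(0)=1$. *)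

(* Defs.v *)
From mathcomp Require Import all_boot all_order all_algebra.
From mathcomp Require Import boolp.
Set Implicit Arguments. Unset Strict Implicit. Unset Printing Implicit Defensive.
Import GRing.Theory Num.Theory.
Local Open Scope ring_scope.

Definition inA (psi : nat -> nat) (k : nat) : bool :=
  `[< exists i : nat, (0 < i)%N /\ psi i = k >].

(* A partition of n is encoded by its multiplicity function m : part size k
   (0 <= k <= n) |-> number of occurrences m k (at most n, since parts >= 1). *)
Definition is_partA (psi : nat -> nat) (n : nat)
    (m : {ffun 'I_n.+1 -> 'I_n.+1}) : bool :=
  ((\sum_(k < n.+1) (k : nat) * (m k : nat))%N == n)
  && [forall k : 'I_n.+1, (m k != 0%N :> nat) ==> ((0 < k)%N && inA psi k)].

Definition num_parts (n : nat) (m : {ffun 'I_n.+1 -> 'I_n.+1}) : nat :=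
  (\sum_(k < n.+1) (m k : nat))%N.

Definition pbarA (psi : nat -> nat) (n : nat) : int :=
  \sum_(m : {ffun 'I_n.+1 -> 'I_n.+1} | is_partA psi m)
     (-1) ^+ (num_parts m).

Definition pbarA_alpha (psi : nat -> nat) (alpha n : nat) : int :=
  \sum_(m : {ffun 'I_n.+1 -> 'I_n.+1} |
          is_partA psi m && [forall k : 'I_n.+1, (m k <= alpha)%N])
     (-1) ^+ (num_parts m).

(* Main.v *)
Require Import Defs.
From mathcomp Require Import all_boot all_order all_algebra.
Import GRing.Theory Num.Theory.

From mathcomp Require Import zify.

Lemma expand_digits b L x : 1 < b -> x < b ^ L ->
  x = \sum_(j < L) b ^ j * (x %/ b ^ j %% b).
Proof.
move=> b1; elim: L x => [|L IH] x hx.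
  by rewrite big_ord0; move: hx; rewrite expn0; case: x.
rewrite big_ord_recl expn0 mul1n divn1.
have b0 : 0 < b by apply: ltnW.
have hx' : x %/ b < b ^ L by rewrite ltn_divLR // -expnSr.
under eq_bigr => j _ do rewrite /bump /= expnS divnMA -mulnA.
rewrite -big_distrr /= -IH //.
by rewrite addnC mulnC -divn_eq.
Qed.

Lemma digits_unique b L (d : nat -> nat) i : (forall j, d j < b) -> i < L ->
  (\sum_(j < L) b ^ j * d j) %/ b ^ i %% b = d i.
Proof.
move=> hd; elim: L d i hd => [|L IH] d i hd // hi.
have b0 : 0 < b by apply: leq_ltn_trans (hd 0).
rewrite big_ord_recl expn0 mul1n.
under eq_bigr => j _ do rewrite /bump /= expnS -mulnA.
rewrite -big_distrr /=.
case: i hi => [|i] hi.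
  by rewrite expn0 divn1 addnC mulnC modnMDl modn_small.
rewrite expnS divnMA addnC mulnC divnMDl // (divn_small (hd 0)) addn0.
exact: (IH (fun j => d j.+1)).
Qed.

Local Open Scope ring_scope.
Notation T n := {ffun 'I_n.+1 -> 'I_n.+1}.

Definition partB (psi : nat -> nat) (alpha B N : nat) (mu : T B) : bool :=
  (((\sum_(k < B.+1) (k : nat) * (mu k : nat))%N == N)
  && [forall k : 'I_B.+1, (mu k != 0%N :> nat) ==> ((0 < k)%N && inA psi k)])
  && [forall k : 'I_B.+1, (mu k <= alpha)%N].

Arguments partB psi alpha {B} N mu.
Definition sgn {B} (mu : T B) : int := (-1) ^+ (num_parts mu).

Lemma leq_sum1 (I : finType) (F : I -> nat) i : (F i <= \sum_k F k)%N.
Proof. by rewrite (bigD1 i) //= leq_addr. Qed.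

Lemma sum_widen (F : nat -> nat) N B : (N <= B)%N -> (forall k, (N < k)%N -> F k = 0%N) ->
  (\sum_(k < B.+1) F k = \sum_(k < N.+1) F k)%N.
Proof.
move=> NB hF; rewrite [RHS](big_ord_widen B.+1) // [RHS]big_mkcond /=.
by apply: eq_bigr => k _; case: ifP => // /negbT; rewrite -leqNgt => /hF ->.
Qed.

Lemma part_bound psi B N (mu : T B) :
  ((\sum_(k < B.+1) (k : nat) * (mu k : nat))%N == N)
  && [forall k : 'I_B.+1, (mu k != 0%N :> nat) ==> ((0 < k)%N && inA psi k)] ->
  forall k : 'I_B.+1, (mu k <= N)%N && ((N < k)%N ==> (mu k == 0%N :> nat)).
Proof.
case/andP => /eqP hs /forallP hf k.
have hk : ((k : nat) * mu k <= N)%N by rewrite -hs (leq_sum1 _ (fun k : 'I_B.+1 => (k : nat) * mu k)%N).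
case: (boolP (mu k == 0%N :> nat)) => [/eqP ->|mk0]; first by rewrite leq0n implybT.
have k0 : (0 < k)%N by move: (hf k); rewrite mk0 /= => /andP [].
apply/andP; split.
  by apply: leq_trans hk; rewrite leq_pmull.
apply/implyP => Nk; exfalso; move: hk; rewrite leqNgt => /negP; apply.
by apply: leq_trans Nk _; rewrite leq_pmulr // lt0n.
Qed.

Definition ext (N B : nat) (mu : T N) : T B :=
  [ffun k : 'I_B.+1 => inord (if (k <= N)%N then (mu (inord k) : nat) else 0%N)].
Arguments ext {N} B mu.

Lemma extE N B (mu : T N) k : (N <= B)%N ->
  (ext B mu k : nat) = if (k <= N)%N then (mu (inord k) : nat) else 0%N.
Proof.
move=> NB; rewrite ffunE inordK //; case: ifP => // _.
by apply: leq_trans (ltn_ord _) _.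
Qed.

Lemma forall_ext N B (mu : T N) (P : nat -> nat -> bool) : (N <= B)%N ->
  (forall k, P k 0%N) ->
  [forall k : 'I_B.+1, P k (ext B mu k)] = [forall k : 'I_N.+1, P k (mu k)].
Proof.
move=> NB P0; apply/forallP/forallP => h k.
  have kB : (k < B.+1)%N by apply: leq_trans (ltn_ord k) _.
  move: (h (inord k)); rewrite extE // inordK // -ltnS ltn_ord.
  by have -> : (inord k : 'I_N.+1) = k by apply: val_inj; rewrite /= inordK.
rewrite extE //; case: ifP => // kN.
by rewrite -{1}(@inordK N k) //.
Qed.

Arguments forall_ext {N B} mu P.
Lemma sum_ext N B (mu : T N) (F : nat -> nat -> nat) : (N <= B)%N ->
  (forall k, F k 0%N = 0%N) ->
  (\sum_(k < B.+1) F k (ext B mu k) = \sum_(k < N.+1) F k (mu k))%N.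
Proof.
move=> NB F0.
rewrite (eq_bigr (fun k : 'I_B.+1 => F k (if (k <= N)%N then (mu (inord k) : nat) else 0%N))); last first.
  by move=> k _; rewrite extE.
rewrite (sum_widen (fun k => F k (if (k <= N)%N then (mu (inord k) : nat) else 0%N)) N B NB); last first.
  by move=> k; rewrite ltnNge => /negbTE ->.
apply: eq_bigr => k _; rewrite -ltnS ltn_ord.
by have -> : (inord k : 'I_N.+1) = k by apply: val_inj; rewrite /= inordK.
Qed.

Arguments sum_ext {N B} mu F.
Lemma lift_alpha psi alpha N B : (N <= B)%N ->
  pbarA_alpha psi alpha N = \sum_(mu : T B | partB psi alpha N mu) sgn mu.
Proof.
move=> NB; rewrite /pbarA_alpha.
have eqP2 : forall mu : T N, partB psi alpha N (ext B mu) = partB psi alpha N mu.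
  move=> mu; rewrite /partB.
  rewrite (sum_ext mu (fun k v => k * v)%N) //; last by move=> ?; rewrite muln0.
  rewrite (forall_ext mu (fun k v => (v != 0%N) ==> ((0 < k)%N && inA psi k))) //.
  by rewrite (forall_ext mu (fun k v => (v <= alpha)%N)).
rewrite [RHS](reindex (@ext N B)) /=.
  apply: eq_big => mu; first by rewrite eqP2.
  by move=> _; rewrite /sgn /num_parts (sum_ext mu (fun k v => v)).
exists (fun mu : T B => [ffun k : 'I_N.+1 => inord (mu (inord k))]).
  move=> mu _; apply/ffunP => k; rewrite !ffunE.
  have kB : (k < B.+1)%N by apply: leq_trans (ltn_ord k) _.
  have mB : (mu k < B.+1)%N by apply: leq_trans (ltn_ord (mu k)) _.
  have -> : (nat_of_ord (inord k : 'I_B.+1) <= N)%N by rewrite inordK // -ltnS.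
  have -> : (inord (inord k : 'I_B.+1) : 'I_N.+1) = k by apply: val_inj; rewrite /= !inordK.
  by apply: val_inj; rewrite /= !inordK.
move=> mu; rewrite inE => hP.
have hb := part_bound _ _ _ _ (proj1 (andP hP)).
apply/ffunP => k; apply: val_inj; rewrite /= extE //.
case: ifP => kN.
  rewrite ffunE.
  have -> : (inord (inord k : 'I_N.+1) : 'I_B.+1) = k.
    by apply: val_inj; rewrite /= !inordK // ltnS.
  by rewrite inordK // ltnS; case/andP: (hb k).
by move: (hb k); rewrite ltnNge kN /= => /andP [_ /eqP ->].
Qed.


Notation G n := {ffun 'I_n.+1 -> T n}.

Definition digits (alpha n : nat) (m : T n) : G n :=
  [ffun j : 'I_n.+1 => [ffun k : 'I_n.+1 => inord (m k %/ alpha.+1 ^ j %% alpha.+1)%N]].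

Arguments digits alpha {n} m.
Lemma digitsE alpha n (m : T n) j k :
  (digits alpha m j k : nat) = (m k %/ alpha.+1 ^ j %% alpha.+1)%N.
Proof.
rewrite !ffunE inordK //.
exact: leq_ltn_trans (leq_trans (leq_mod _ _) (leq_div _ _)) (ltn_ord (m k)).
Qed.

Definition combine (alpha n : nat) (g : G n) : T n :=
  [ffun k => inord (\sum_(j < n.+1) alpha.+1 ^ j * g j k)%N].

Arguments combine alpha {n} g.
Definition sz n (mu : T n) : nat := (\sum_(k < n.+1) k * mu k)%N.

Arguments sz {n} mu.
Definition N0 n (g : G n) : T n := [ffun j => inord (sz (g j))].

Arguments N0 {n} g.
Definition Cg psi alpha n (g : G n) : bool :=
  ((\sum_(j < n.+1) alpha.+1 ^ j * N0 g j)%N == n)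
  && [forall j, partB psi alpha (N0 g j) (g j)].

Arguments Cg psi alpha {n} g.
Lemma mexp alpha n (m : T n) k : (0 < alpha)%N ->
  (m k : nat) = (\sum_(j < n.+1) alpha.+1 ^ j * digits alpha m j k)%N.
Proof.
move=> a0; under eq_bigr => j _ do rewrite digitsE.
apply: expand_digits; first by rewrite ltnS.
apply: leq_trans (ltn_ord (m k)) _.
by apply: ltnW; apply: ltn_expl.
Qed.

Lemma sign_odd_mul (b j d : nat) : odd b -> ((-1 : int) ^+ (b ^ j * d)%N) = (-1) ^+ d.
Proof.
move=> ob; rewrite exprM -[X in X ^+ d]signr_odd oddX ob orbT expr1 //.
Qed.

Lemma sign_digits alpha n (m : T n) : (0 < alpha)%N -> ~~ odd alpha ->
  \prod_(j < n.+1) sgn (digits alpha m j) = sgn m.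
Proof.
move=> a0 ae; rewrite /sgn /num_parts.
rewrite (eq_bigr (fun j => \prod_(k < n.+1) (-1) ^+ (digits alpha m j k : nat))); last first.
  by move=> j _; rewrite expr_sum.
rewrite exchange_big /= expr_sum; apply: eq_bigr => k _.
rewrite (@mexp alpha n m k a0) expr_sum; apply: eq_bigr => j _.
by rewrite sign_odd_mul //= ae.
Qed.

Lemma swap_sz alpha n (m : T n) : (0 < alpha)%N ->
  (\sum_(j < n.+1) alpha.+1 ^ j * sz (digits alpha m j))%N = (\sum_(k < n.+1) k * m k)%N.
Proof.
move=> a0; rewrite /sz; under eq_bigr => j _ do rewrite big_distrr /=.
rewrite exchange_big /=; apply: eq_bigr => k _.
rewrite (@mexp alpha n m k a0) big_distrr /=; apply: eq_bigr => j _.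
by rewrite mulnCA.
Qed.

Lemma digit_le alpha n (m : T n) j k : (digits alpha m j k <= m k)%N.
Proof. by rewrite digitsE; apply: leq_trans (leq_mod _ _) (leq_div _ _). Qed.

Lemma Cg_digits psi alpha n (m : T n) : (0 < alpha)%N ->
  Cg psi alpha (digits alpha m) = is_partA psi m.
Proof.
move=> a0; rewrite /Cg /is_partA.
apply/andP/andP.
- case=> /eqP hW /forallP hQ.
  have e j : sz (digits alpha m j) = N0 (digits alpha m) j.
    by rewrite /sz; case/andP: (hQ j) => /andP [/eqP -> _] _.
  split.
    by rewrite -(@swap_sz alpha n m a0); apply/eqP; rewrite -[RHS]hW; apply: eq_bigr => j _; rewrite e.
  apply/forallP => k; apply/implyP => mk.
  case: (boolP [exists j, digits alpha m j k != 0%N :> nat]).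
    case/existsP => j dj.
    by case/andP: (hQ j) => /andP [_ /forallP /(_ k) /implyP /(_ dj)].
  rewrite negb_exists => /forallP hz; exfalso; move: mk.
  rewrite (@mexp alpha n m k a0) big1 // => j _.
  by move: (hz j); rewrite negbK => /eqP ->; rewrite muln0.
- case=> /eqP hs /forallP hf.
  have hsz j : sz (digits alpha m j) = N0 (digits alpha m) j.
    rewrite /N0 [X in _ = nat_of_ord X]ffunE inordK // ltnS; apply: (leq_trans _ (eq_leq hs)); apply: leq_sum => k _.
    by apply: leq_mul => //; apply: digit_le.
  split.
    by apply/eqP; rewrite -[RHS]hs -(@swap_sz alpha n m a0); apply: eq_bigr => j _; rewrite hsz.
  apply/forallP => j; apply/andP; split; first (apply/andP; split).
  + by rewrite -hsz.
  + apply/forallP => k; apply/implyP => dk; apply: (implyP (hf k)).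
    by rewrite -lt0n; apply: leq_trans (@digit_le alpha n m j k); rewrite lt0n.
  + by apply/forallP => k; rewrite digitsE -ltnS ltn_pmod.
Qed.

Lemma combine_digits alpha n (m : T n) : (0 < alpha)%N ->
  combine alpha (digits alpha m) = m.
Proof.
move=> a0; apply/ffunP => k; apply: val_inj.
by rewrite ffunE /= -(@mexp alpha n m k a0) inordK.
Qed.

Lemma Cg_sz psi alpha n (g : G n) j : Cg psi alpha g -> sz (g j) = N0 g j.
Proof.
by case/andP => _ /forallP /(_ j); rewrite /sz; case/andP => /andP [/eqP -> _] _.
Qed.

Lemma Cg_bound psi alpha n (g : G n) k : Cg psi alpha g ->
  (\sum_(j < n.+1) alpha.+1 ^ j * g j k <= n)%N.
Proof.
move=> hC; have := hC; case/andP => /eqP hW /forallP hQ.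
case: (posnP k) => [k0|k0].
  rewrite big1 // => j _.
  case/andP: (hQ j) => /andP [_ /forallP /(_ k)]; rewrite k0 /= implybF negbK.
  by move=> /eqP ->; rewrite muln0.
rewrite -[X in (_ <= X)%N]hW; apply: leq_sum => j _; apply: leq_mul => //.
rewrite -(@Cg_sz psi alpha n g j hC); apply: leq_trans (leq_sum1 _ (fun k : 'I_n.+1 => (k : nat) * g j k)%N k).
by rewrite leq_pmull.
Qed.

Lemma digits_combine psi alpha n (g : G n) : (0 < alpha)%N -> Cg psi alpha g ->
  digits alpha (combine alpha g) = g.
Proof.
move=> a0 hC; have := hC; case/andP => _ /forallP hQ.
apply/ffunP => j; apply/ffunP => k; apply: val_inj.
rewrite /= digitsE ffunE inordK; last by rewrite ltnS (@Cg_bound psi alpha n g k hC).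
rewrite (eq_bigr (fun j' : 'I_n.+1 => alpha.+1 ^ j' * g (inord j') k)%N); last first.
  by move=> j' _; rewrite inord_val.
rewrite (@digits_unique alpha.+1 n.+1 (fun j' => g (inord j') k)) ?inord_val //.
move=> j'; case/andP: (hQ (inord j')) => _ /forallP /(_ k).
by rewrite ltnS.
Qed.

Lemma WQ psi alpha n (N : T n) (g : G n) :
  (((\sum_(i < n.+1) (alpha.+1) ^ i * (N i : nat))%N == n)
    && [forall j, partB psi alpha (N j) (g j)])
  = (N == N0 g) && Cg psi alpha g.
Proof.
apply/andP/andP.
  case=> hW /forallP hQ.
  have hN : N = N0 g.
    apply/ffunP => j; apply: val_inj; rewrite /N0 ffunE /= inordK.
      by rewrite /sz; case/andP: (hQ j) => /andP [/eqP -> _] _.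
    by case/andP: (hQ j) => /andP [/eqP e _] _; rewrite /sz e.
  split; first by rewrite hN. by rewrite /Cg -hN hW; apply/forallP.
by case=> /eqP -> /andP [].
Qed.

Lemma prod_if psi alpha n (N : T n) (g : G n) :
  \prod_(j < n.+1) (if partB psi alpha (N j) (g j) then sgn (g j) else 0)
  = if [forall j, partB psi alpha (N j) (g j)] then \prod_(j < n.+1) sgn (g j) else 0.
Proof.
case: ifP => [/forallP h|/negbT]; first by apply: eq_bigr => j _; rewrite h.
rewrite negb_forall => /existsP [j hj].
by rewrite (bigD1 j) //= (negbTE hj) mul0r.
Qed.

Theorem mainTheorem5 (psi : nat -> nat)
  (psi_pos : forall i : nat, (0 < i)%N -> (0 < psi i)%N)
  (psi_inj : forall i j : nat, (0 < i)%N -> (0 < j)%N -> psi i = psi j -> i = j)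
  (alpha : nat) (alpha_pos : (0 < alpha)%N) (alpha_even : ~~ odd alpha)
  (n : nat) :
  pbarA psi n =
  \sum_(N : {ffun 'I_n.+1 -> 'I_n.+1} |
          (\sum_(i < n.+1) (alpha.+1) ^ i * (N i : nat))%N == n)
     \prod_(j < n.+1) pbarA_alpha psi alpha (N j).
Proof.
symmetry.
transitivity (\sum_(N : T n | (\sum_(i < n.+1) (alpha.+1) ^ i * (N i : nat))%N == n)
   \sum_(g : G n) (if [forall j, partB psi alpha (N j) (g j)] then \prod_(j < n.+1) sgn (g j) else 0)).
  apply: eq_bigr => N _.
  rewrite (eq_bigr (fun j => \sum_(mu : T n) (if partB psi alpha (N j) mu then sgn mu else 0))); last first.
    move=> j _; rewrite (@lift_alpha psi alpha (N j) n); last by rewrite -ltnS.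
    by rewrite big_mkcond.
  rewrite bigA_distr_bigA /=; apply: eq_bigr => g _.
  exact: prod_if.
rewrite exchange_big /=.
transitivity (\sum_(g : G n) (if Cg psi alpha g then \prod_(j < n.+1) sgn (g j) else 0)).
  apply: eq_bigr => g _; rewrite -big_mkcondr /=.
  case: (boolP (Cg psi alpha g)) => hC.
    rewrite (eq_bigl (fun N => N == N0 g)); first by rewrite big_pred1_eq.
    by move=> N; rewrite /= WQ hC andbT.
  rewrite big_pred0 // => N; rewrite WQ (negbTE hC) andbF //.
rewrite -big_mkcond /pbarA (reindex (@digits alpha n)).
  apply: eq_big => m; first exact: Cg_digits.
  by move=> _; rewrite sign_digits.
exists (combine alpha) => m; first by move=> _; rewrite combine_digits.
by rewrite inE => hC; rewrite (@digits_combine psi alpha n m alpha_pos hC).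
Qed.
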